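(* Let $\Omega\subset\mathbb{R}^d$ be a connected, bounded open domain and let $n\ge 1$. Let $\mathbf{r}=(\mathbf{r}_1,\ldots,\mathbf{r}_n)\in\Upsilon$, where $\mathbf{r}_i=(b_i,\boldsymbol{\omega}_i)$ with $b_i\in\mathbb{R}$, $\boldsymbol{\omega}_i\in\mathcal{S}^{d-1}$ and $\mathcal{P}_i(\mathbf{r}_i)\cap\Omega\neq\emptyset$ for each $i$. Assume the hyperplanes $\mathcal{P}_1(\mathbf{r}_1),\ldots,\mathcal{P}_n(\mathbf{r}_n)$ are pairwise distinct. Then the functions $\sigma_0,\sigma_1,\ldots,\sigma_n$ are linearly independent as functions on $\Omega$.
   Context: $\sigma(t)=\max\{0,t\}$ is the ReLU function. $\mathcal{S}^{d-1}$ is the unit sphere in $\mathbb{R}^d$. For $\mathbf{x}\in\mathbb{R}^d$ write $\mathbf{y}=(1,x_1,\ldots,x_d)^T$. For $\mathbf{r}_i=(b_i,\boldsymbol{\omega}_i)\in\mathbb{R}^{d+1}$, the breaking hyperplane is $\mathcal{P}_i(\mathbf{r}_i)=\{\mathbf{x}\in\Omega:\boldsymbol{\omega}_i\cdot\mathbf{x}+b_i=0\}$ (hyperplanes are compared as hyperplanes $\{\mathbf{x}\in\mathbb{R}^d:\boldsymbol{\omega}_i\cdot\mathbf{x}+b_i=0\}$). The admissible set is $\Upsilon=\{\mathbf{r}=(\mathbf{r}_1,\ldots,\mathbf{r}_n): \mathbf{r}_i=(b_i,\boldsymbol{\omega}_i),\ b_i\in\mathbb{R},\ \boldsymbol{\omega}_i\in\mathcal{S}^{d-1},\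 \mathcal{P}_i(\mathbf{r}_i)\cap\Omega\neq\emptyset\}$. Define $\sigma_0(\mathbf{x})=1$ and $\sigma_i(\mathbf{x})=\sigma(\mathbf{r}_i\cdot\mathbf{y})=\sigma(\boldsymbol{\omega}_i\cdot\mathbf{x}+b_i)$ for $i=1,\ldots,n$. *)

(* Defs.v *)
From HB Require Import structures.
From mathcomp Require Import all_boot all_order all_algebra.
From mathcomp Require Import all_classical all_reals all_analysis.
Set Implicit Arguments. Unset Strict Implicit. Unset Printing Implicit Defensive.
Import Order.TTheory GRing.Theory Num.Theory.
Import numFieldNormedType.Exports.
Local Open Scope ring_scope.
Local Open Scope classical_set_scope.

Definition dotv {R : realType} {d : nat} (u v : 'rV[R]_d) : R :=
  \sum_(j < d) u ord0 j * v ord0 j.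

Definition unit_sphere {R : realType} (d : nat) : set 'rV[R]_d :=
  [set w | dotv w w = 1].

Definition relu {R : realType} (t : R) : R := Num.max 0 t.

Definition hyperplane {R : realType} {d : nat} (b : R) (w : 'rV[R]_d)
  : set 'rV[R]_d := [set x | dotv w x + b = 0].

(* sigma_i(x) = relu (w_i . x + b_i) *)
Definition neuron {R : realType} {d : nat} (b : R) (w : 'rV[R]_d)
  (x : 'rV[R]_d) : R := relu (dotv w x + b).

(* Main.v *)
Require Import Defs.
From HB Require Import structures.
From mathcomp Require Import all_boot all_order all_algebra.
From mathcomp Require Import all_classical all_reals all_analysis.
From mathcomp Require Import lra ring.
Import Order.TTheory GRing.Theory Num.Theory.
Import numFieldNormedType.Exports.
Local Open Scope ring_scope.
Local Open Scope classical_set_scope.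

Section Helpers.
Variables (R : realType) (d : nat).
Implicit Types (u x y : 'rV[R]_d) (a : R).

Lemma dotvDr u x y : dotv u (x + y) = dotv u x + dotv u y.
Proof. by rewrite /dotv -big_split; apply: eq_bigr => j _; rewrite mxE mulrDr. Qed.

Lemma dotvZr u a x : dotv u (a *: x) = a * dotv u x.
Proof. by rewrite /dotv mulr_sumr; apply: eq_bigr => j _; rewrite mxE mulrCA. Qed.

Lemma dotvNr u x : dotv u (- x) = - dotv u x.
Proof. by rewrite -scaleN1r dotvZr mulN1r. Qed.

Lemma dotvBr u x y : dotv u (x - y) = dotv u x - dotv u y.
Proof. by rewrite dotvDr dotvNr. Qed.

Lemma dotv_sumr u (F : 'I_d -> 'rV[R]_d) :
  dotv u (\sum_(k < d) F k) = \sum_(k < d) dotv u (F k).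
Proof.
rewrite /dotv; under eq_bigr do rewrite summxE mulr_sumr.
by rewrite exchange_big.
Qed.

Lemma dotvC u x : dotv u x = dotv x u.
Proof. by apply: eq_bigr => j _; rewrite mulrC. Qed.

Lemma dotv_delta u (k : 'I_d) : dotv u (delta_mx 0 k) = u 0 k.
Proof.
rewrite /dotv (bigD1 k) //= big1 => [|j jk]; first by rewrite mxE !eqxx mulr1 addr0.
by rewrite mxE eq_sym (negbTE jk) andbF mulr0.
Qed.

Lemma relu_near a s : a != 0 ->
  \forall t \near (0:R), relu (a + t * s) = relu a + t * (if 0 < a then s else 0).
Proof.
move=> a0; apply/nbhs_ballP.
have ha : 0 < `|a| by rewrite normr_gt0.
exists (`|a| / (`|s| + 1)); first by apply: divr_gt0 => //; rewrite ltr_wpDl.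
move=> t; rewrite /= -ball_normE /= sub0r normrN => ht.
have hts : `|t * s| < `|a|.
  rewrite normrM; apply: (le_lt_trans (y := `|t| * (`|s| + 1))).
    by rewrite ler_wpM2l // lerDl.
  by rewrite -ltr_pdivlMr ?ltr_wpDl.
have h1 := ler_norm (t * s); have h2 : - `|t * s| <= t * s.
  by rewrite lerNl -normrN ler_norm.
have [ap|an] : 0 < a \/ a < 0.
  by move: a0; rewrite neq_lt => /orP[]; [right|left].
  rewrite ap (gtr0_norm ap) in hts *.
  rewrite /relu !max_r ?ltW //; lra.
rewrite (ltr0_norm an) in hts.
rewrite ltNge (ltW an) /= /relu mulr0 addr0 !max_l ?ltW //; lra.
Qed.

Lemma dotvZl u a x : dotv (a *: u) x = a * dotv u x.
Proof. by rewrite dotvC dotvZr dotvC. Qed.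

End Helpers.

Lemma cvg_sumv (R : realType) (V : normedModType R) (T : Type) (F : set_system T)
  (FF : Filter F) (I : Type) (r : seq I) (f : I -> T -> V) (a : I -> V) :
  (forall k, f k @ F --> a k) ->
  (fun x => \sum_(k <- r) f k x) @ F --> \sum_(k <- r) a k.
Proof.
move=> hf; elim: r => [|k r IH].
  have -> : (fun x => \sum_(k <- [::]) f k x) = fun=> 0.
    by apply/funext => x; rewrite big_nil.
  by rewrite big_nil; apply: cvg_cst.
have -> : (fun x => \sum_(k0 <- k :: r) f k0 x) =
   (fun x => f k x + \sum_(k0 <- r) f k0 x).
  by apply/funext => x; rewrite big_cons.
by rewrite big_cons; apply: cvgD.
Qed.

Lemma kink (R : realType) (d n : nat) (Omega : set 'rV[R]_d)
  (b : 'I_n -> R) (w : 'I_n -> 'rV[R]_d) (c0 : R) (c : 'I_n -> R) (i : 'I_n)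
  (p : 'rV[R]_d) :
  @unit_sphere R d (w i) -> nbhs p Omega -> dotv (w i) p + b i = 0 ->
  (forall j, j != i -> dotv (w j) p + b j != 0) ->
  (forall x, Omega x -> c0 + \sum_(j < n) c j * neuron (b j) (w j) x = 0) ->
  c i = 0.
Proof.
move=> ui Hnb Hpi Hpj Hsum.
pose a j := dotv (w j) p + b j.
pose s j := dotv (w j) (w i).
pose beta j := if 0 < a j then s j else 0.
have HO : \forall t \near (0:R), Omega (p + t *: w i).
  have cv : (fun t : R => p + t *: w i) @ (0:R) --> p.
    rewrite -[X in _ --> X]addr0 -(scale0r (w i)).
    apply: cvgD; first exact: cvg_cst.
    by apply: cvgZ; [exact: cvg_id | exact: cvg_cst].
  exact: (cv _ Hnb).
have HR : \forall t \near (0:R), forall j, j != i ->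
    relu (a j + t * s j) = relu (a j) + t * beta j.
  apply: (@filter_forall _ _ (fun j t => j != i ->
    relu (a j + t * s j) = relu (a j) + t * beta j) (nbhs (0:R)) _) => j; case: (eqVneq j i) => [->|ji].
    by apply: nearW => t /negP.
  move: (@relu_near R _ (s j) (Hpj j ji)); apply: filterS => t ht _; exact: ht.
have [e /= e0 He] := iffLR (nbhs_ballP _ _) (filterI HO HR).
pose A := \sum_(j < n | j != i) c j * relu (a j).
pose B := \sum_(j < n | j != i) c j * beta j.
have key t : ball 0 e t -> c0 + c i * relu t + (A + t * B) = 0.
  move=> /He [Ht Hr]; have := Hsum _ Ht; rewrite (bigD1 i) //=.
  have -> : neuron (b i) (w i) (p + t *: w i) = relu t.
    rewrite /neuron dotvDr dotvZr ui; congr relu; lra.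
  rewrite (eq_bigr (fun j => c j * relu (a j) + t * (c j * beta j))); last first.
    move=> j ji; rewrite /neuron dotvDr dotvZr.
    have -> : dotv (w j) p + t * dotv (w j) (w i) + b j = a j + t * s j.
      by rewrite /a /s; ring.
    rewrite Hr //; ring.
  rewrite /A /B big_split /= -mulr_sumr => h; rewrite -[RHS]h; ring.
have bl t : `|t| < e -> ball (0:R) e t.
  by move=> ht; rewrite -ball_normE /= sub0r normrN.
have e2 : 0 < e / 2 by rewrite divr_gt0.
have e2e : e / 2 < e by rewrite ltr_pdivrMr // ltr_pMr // ltr1n.
have k0 := key 0 (bl 0 (ltac:(by rewrite normr0))).
have k1 := key (e / 2) (bl (e / 2) (ltac:(by rewrite gtr0_norm))).
have k2 := key (- (e / 2)) (bl (- (e / 2)) (ltac:(by rewrite normrN gtr0_norm))).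
rewrite /relu in k0 k1 k2.
have m2 : - (e / 2) <= 0 by rewrite oppr_le0 ltW.
rewrite maxxx in k0; rewrite (max_r (ltW e2)) in k1; rewrite (max_l m2) in k2.
clearbody A B.
move: k0 k1 k2 e2; set x := e / 2 => k0 k1 k2 x0.
have hB : x * B = 0.
  have -> : x * B = (c0 + c i * 0 + (A + 0 * B)) - (c0 + c i * 0 + (A + - x * B)) by ring.
  by rewrite k0 k2 subrr.
have B0 : B = 0 by move/eqP: hB; rewrite mulf_eq0 (gt_eqF x0) => /eqP.
have hc : x * c i = 0.
  have -> : x * c i = c0 + c i * x + (A + x * B) by rewrite B0; rewrite B0 in k0; rewrite -[RHS]subr0 -{2}k0; ring.
  by rewrite k1.
by move/eqP: hc; rewrite mulf_eq0 (gt_eqF x0) => /eqP.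
Qed.


Lemma generic (R : realType) (d n : nat) (Omega : set 'rV[R]_d)
  (b : 'I_n -> R) (w : 'I_n -> 'rV[R]_d) (i : 'I_n) (q : 'rV[R]_d) :
  (forall j, @unit_sphere R d (w j)) -> open Omega -> Omega q ->
  dotv (w i) q + b i = 0 ->
  (forall j, j != i -> hyperplane (b i) (w i) <> hyperplane (b j) (w j)) ->
  exists p, [/\ Omega p, dotv (w i) p + b i = 0 &
     forall j, j != i -> dotv (w j) p + b j != 0].
Proof.
move=> unit Hop Hq Hqi Hdist.
pose e' (k : 'I_d) : 'rV[R]_d := delta_mx 0 k - (w i 0 k) *: w i.
pose g (t : R) := q + \sum_(k < d) t ^+ k.+1 *: e' k.
pose m j (k : 'I_d) := w j 0 k - w i 0 k * dotv (w j) (w i).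
have dg j t : dotv (w j) (g t) + b j =
    (dotv (w j) q + b j) + \sum_(k < d) t ^+ k.+1 * m j k.
  rewrite dotvDr dotv_sumr addrAC; congr (_ + _); apply: eq_bigr => k _.
  by rewrite dotvZr dotvBr dotv_delta dotvZr.
have gi t : dotv (w i) (g t) + b i = 0.
  rewrite dg Hqi add0r big1 // => k _.
  by rewrite /m (unit i) mulr1 subrr mulr0.
pose P j : {poly R} := (dotv (w j) q + b j)%:P +
   \sum_(k < d) m j k *: 'X^(k.+1).
have hP j t : (P j).[t] = dotv (w j) (g t) + b j.
  rewrite dg hornerD hornerC horner_sum; congr (_ + _); apply: eq_bigr => k _.
  by rewrite hornerZ hornerXn mulrC.
have Pnz j : j != i -> P j != 0.
  move=> ji; apply/negP => /eqP P0.
  have c0 : dotv (w j) q + b j = 0.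
    have := congr1 (fun p : {poly R} => p`_0) P0.
    rewrite coefD coefC /= coef_sum big1 ?addr0 ?coef0 // => k _.
    by rewrite coefZ coefXn /= mulr0.
  have ck k : m j k = 0.
    have := congr1 (fun p : {poly R} => p`_k.+1) P0.
    rewrite coefD coefC /= coef_sum (bigD1 k) //= big1 => [|k' k'k].
      by rewrite coefZ coefXn eqxx mulr1 add0r addr0 coef0.
    rewrite coefZ coefXn eqSS.
    have -> : (k == k' :> nat) = false by apply/negbTE; rewrite eq_sym.
    by rewrite mulr0.
  pose l := dotv (w j) (w i).
  have wj : w j = l *: w i.
    apply/rowP => k; rewrite mxE; move/eqP: (ck k); rewrite /m subr_eq0.
    by move/eqP => ->; rewrite mulrC.
  have l2 : l * l = 1.
    by have := unit j; rewrite /unit_sphere /= {1 2}wj dotvZl dotvZr (unit i) mulr1.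
  have bj : b j = l * b i.
    move: c0; rewrite wj dotvZl => h.
    have -> : b j = l * dotv (w i) q + b j - l * dotv (w i) q by ring.
    rewrite h add0r; have -> : dotv (w i) q = - b i by rewrite -(subr0 (b i)) -Hqi; ring.
    ring.
  apply: (Hdist j ji); rewrite /hyperplane; apply/funext => x /=; apply/propext.
  rewrite wj bj dotvZl; split => h.
    by rewrite -mulrDr h mulr0.
  have : l * (l * dotv (w i) x + l * b i) = 0 by rewrite h mulr0.
  by rewrite mulrDr !mulrA l2 !mul1r.
pose Pp := \prod_(j | j != i) P j.
have Ppnz : Pp != 0 by apply/prodf_neq0.
have cv : g @ (0:R) --> q.
  have -> : q = q + \sum_(k < d) (0:R) ^+ k.+1 *: e' k.
    by rewrite big1 ?addr0 // => k _; rewrite expr0n scale0r.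
  apply: cvgD; first exact: cvg_cst.
  apply: cvg_sumv => k; apply: cvgZ; last exact: cvg_cst.
  exact: exprn_continuous.
have Hnb : nbhs q Omega by apply: Hop.
have := cv _ Hnb; move=> /(iffLR (nbhs_ballP _ _))[e /= e0 He].
pose rs := mkseq (fun k : nat => e / (k.+2)%:R) (size Pp).
have : ~~ all (root Pp) rs.
  apply/negP => hall; have := max_poly_roots Ppnz hall.
  have hu : uniq rs.
    apply: mkseq_uniq => x y h.
    have : (x.+2)%:R = (y.+2)%:R :> R.
      apply: invr_inj; apply: (mulfI (lt0r_neq0 e0)); exact: h.
    by move/eqP; rewrite eqr_nat !eqSS => /eqP.
  by move=> /(_ hu); rewrite size_mkseq ltnn.
case/allPn => t trs ntroot.
move: trs; rewrite /rs /mkseq => /mapP[k _ tE]; subst t.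
set t := e / (k.+2)%:R.
have t0 : 0 < t by rewrite divr_gt0.
have te : t < e by rewrite ltr_pdivrMr // ltr_pMr // ltr1n.
exists (g t); split.
- apply: He; rewrite -ball_normE /= sub0r normrN gtr0_norm //.
- exact: gi.
- move=> j ji; move: ntroot; rewrite /root horner_prod => /prodf_neq0/(_ j ji).
  by rewrite hP.
Qed.

Theorem lemma2p1 (R : realType) (d n : nat) (Omega : set 'rV[R]_d)
  (b : 'I_n -> R) (w : 'I_n -> 'rV[R]_d) :
  open Omega -> bounded_set Omega -> connected Omega ->
  (0 < n)%N ->
  (forall i, @unit_sphere R d (w i)) ->
  (forall i, hyperplane (b i) (w i) `&` Omega !=set0) ->
  (forall i j, i != j -> hyperplane (b i) (w i) <> hyperplane (b j) (w j)) ->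
  forall (c0 : R) (c : 'I_n -> R),
    (forall x, Omega x -> c0 + \sum_(i < n) c i * neuron (b i) (w i) x = 0) ->
    c0 = 0 /\ (forall i, c i = 0).
Proof.
move=> Hop _ _ n0 unit Hne Hdist c0 c Hsum.
have ci : forall i, c i = 0.
  move=> i; have [q [Hqi Hq]] := Hne i.
  have [p [Hp Hpi Hpj]] := @generic _ _ _ _ _ _ i q unit Hop Hq Hqi (fun j ji => Hdist i j (ltac:(by rewrite eq_sym))).
  exact: (@kink _ _ _ _ _ _ c0 c i p (unit i) (Hop p Hp) Hpi Hpj Hsum).
split => //.
have [q [_ Hq]] := Hne (Ordinal n0).
have := Hsum q Hq; rewrite big1 ?addr0 // => i _; by rewrite ci mul0r.
Qed.
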